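(* Suppose Algorithm MC is run on $b$ with $|b_j(v)|\le\deg(v)$ for all $v,j$, with $\alpha\in(0,1/4]$ and $T$ satisfying $\alpha^2T\ge\ln(2nk+5Tkn^2)$, and completes all $T$ rounds without terminating in step (4). Then $|b_j(v)-(B\bar f_j)_v|\le5\alpha\deg(v)$ for all $v\in V$ and $j\in[k]$.
   Context: Let $G=(V,E)$ be a unit-capacity undirected graph, $n=|V|\ge3$, every vertex of degree $\deg(v)\ge1$, each edge with a fixed arbitrary orientation; $B\in\mathbb R^{V\times E}$ is the incidence matrix (column $(u,v)$ has $+1$ in row $u$, $-1$ in row $v$, $0$ elsewhere). Algorithm MC takes $k\ge1$, $b=(b_1,\dots,b_k)\in\mathbb R^{V\times[k]}$ with $|b_j(v)|\le\deg(v)$ for all $v,j$, $\alpha\in(0,1/4]$ and an integer $T\ge1$. Set $w^1_{v,j,+}=w^1_{v,j,-}=1$. For $i=1,\dots,T$: (1) $\tilde w^i_{v,j,\circ}=w^i_{v,j,\circ}$ if $w^i_{v,j,\circ}\ge n$ and $0$ otherwise ($\circ\in\{+,-\}$); (2) $\tilde\phi^i_{v,j}=(\tilde w^i_{v,j,+}-\tilde w^i_{v,j,-})/\deg(v)$; (3) for each edge $(u,v)$ let $j^*$ maximize $|\tilde\phi^i_{u,j}-\tilde\phi^i_{v,j}|$ over $j\in[k]$ (ties arbitrary), set $f^i_{j^*}(u,v)=+1$ if $\tilde\phi^i_{u,j^*}>\tilde\phi^i_{v,j^*}$, $-1$ if $<$, $0$ otherwise, and $f^i_j(u,v)=0$ for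 $j\ne j^*$; (4) if $\sum_{j,v}\tilde\phi^i_{v,j}b_j(v)>\sum_{j,v}\tilde\phi^i_{v,j}(Bf^i_j)_v$, terminate (declaring infeasibility); (5) $r^i_{v,j}=(b_j(v)-(Bf^i_j)_v)/\deg(v)$; (6) $w^{i+1}_{v,j,+}=w^i_{v,j,+}(1+\alpha r^i_{v,j})$, $w^{i+1}_{v,j,-}=w^i_{v,j,-}(1-\alpha r^i_{v,j})$. If all $T$ rounds complete, output $\bar f_j=\frac1T\sum_{i=1}^Tf^i_j$ for each $j$. *)

(* Defs.v *)
From HB Require Import structures.
From mathcomp Require Import all_boot all_order all_algebra.
From mathcomp Require Import all_classical all_reals all_analysis.
Set Implicit Arguments. Unset Strict Implicit. Unset Printing Implicit Defensive.
Import Order.TTheory GRing.Theory Num.Theory.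
Local Open Scope ring_scope.

Section MC.
Variables (R : realType) (V E : finType) (src dst : E -> V) (k : nat).

Definition simple_graph : Prop :=
  (forall e, src e != dst e) /\
  (forall e e', ((src e == src e') && (dst e == dst e')) ||
                ((src e == dst e') && (dst e == src e')) -> e = e').

Definition deg (v : V) : R := #|[pred e | (src e == v) || (dst e == v)]|%:R.

(* (B f)_v for the incidence matrix B *)
Definition Bmul (f : E -> R) (v : V) : R :=
  \sum_(e | src e == v) f e - \sum_(e | dst e == v) f e.

Definition nR : R := #|V|%:R.

Definition wtil (x : R) : R := if nR <= x then x else 0.

(* step (2): w v j = (w_{v,j,+}, w_{v,j,-}) *)
Definition phi_of (w : V -> 'I_k -> R * R) (v : V) (j : 'I_k) : R :=
  (wtil (w v j).1 - wtil (w v j).2) / deg v.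

(* step (3): f (a k-tuple of flows) is a valid choice given potentials phi,
   for some (arbitrary) tie-breaking *)
Definition valid_step3 (phi : V -> 'I_k -> R) (f : 'I_k -> E -> R) : Prop :=
  forall e, exists jstar : 'I_k,
    (forall j, `|phi (src e) j - phi (dst e) j|
               <= `|phi (src e) jstar - phi (dst e) jstar|) /\
    f jstar e = (if phi (src e) jstar > phi (dst e) jstar then 1
                 else if phi (src e) jstar < phi (dst e) jstar then -1 else 0) /\
    (forall j, j != jstar -> f j e = 0).

Definition no_terminate (b : V -> 'I_k -> R) (phi : V -> 'I_k -> R)
    (f : 'I_k -> E -> R) : Prop :=
  \sum_(j : 'I_k) \sum_(v : V) phi v j * b v j
  <= \sum_(j : 'I_k) \sum_(v : V) phi v j * Bmul (f j) v.

Definition rvec (b : V -> 'I_k -> R) (f : 'I_k -> E -> R) (v : V) (j : 'I_k) : R :=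
  (b v j - Bmul (f j) v) / deg v.

(* weights: W i = w^{i+1} (round i = 0..T-1 uses W i and flow F i) *)
Fixpoint W (alpha : R) (b : V -> 'I_k -> R) (F : nat -> 'I_k -> E -> R) (i : nat)
  : V -> 'I_k -> R * R :=
  match i with
  | 0 => fun _ _ => (1, 1)
  | i'.+1 => fun v j =>
      let r := rvec b (F i') v j in
      ((W alpha b F i' v j).1 * (1 + alpha * r),
       (W alpha b F i' v j).2 * (1 - alpha * r))
  end.

Definition fbar (T : nat) (F : nat -> 'I_k -> E -> R) (j : 'I_k) (e : E) : R :=
  T%:R^-1 * \sum_(i < T) F i j e.

End MC.

(* Main.v *)
Require Import Defs.
From HB Require Import structures.
From mathcomp Require Import all_boot all_order all_algebra.
From mathcomp Require Import all_classical all_reals all_analysis.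
From mathcomp Require Import ring lra.
Import Order.TTheory GRing.Theory Num.Theory.
Local Open Scope ring_scope.
Lemma sqb {R : realType} {A p : R} : 0 <= p -> p <= A -> p ^+ 2 <= A ^+ 2.
Proof. move=> h1 h2; nra. Qed.

Lemma L1 (R : realType) (x : R) : -(1/2) <= x -> x <= 1/2 -> expR (x - x ^+ 2) <= 1 + x.
Proof.
move=> h1 h2.
have [x0|x0] := leP 0 x.
  have h := expR_ge1Dx (- (x - x ^+ 2)).
  rewrite expRN in h.
  have Ep := expR_gt0 (x - x ^+ 2).
  set E := expR _ in h Ep *.
  have h' : E * (1 + - (x - x ^+ 2)) <= 1.
    by rewrite -[leRHS](mulfV (lt0r_neq0 Ep)) ler_pM2l.
  have x3 : 0 <= E * x ^+ 3 by apply: mulr_ge0; [exact: ltW | exact: exprn_ge0].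
  nra.
set y := x ^+ 2 - x.
have y0 : 0 <= y by rewrite /y; nra.
set z := y / 16.
have z0 : 0 <= z by rewrite /z; lra.
have u1 := expR_ge1Dx z.
set u := expR z in u1.
have A2 : 1 + 2 * z + z ^+ 2 <= u ^+ 2.
  have p0 : 0 <= 1 + z by lra.
  have := sqb p0 u1; nra.
have A4 : 1 + 4 * z + 6 * z ^+ 2 <= (u ^+ 2) ^+ 2.
  have p0 : 0 <= 1 + 2 * z + z ^+ 2 by nra.
  have := sqb p0 A2; nra.
have A8 : 1 + 8 * z + 28 * z ^+ 2 <= ((u ^+ 2) ^+ 2) ^+ 2.
  have p0 : 0 <= 1 + 4 * z + 6 * z ^+ 2 by nra.
  have := sqb p0 A4; nra.
have A16 : 1 + 16 * z + 120 * z ^+ 2 <= (((u ^+ 2) ^+ 2) ^+ 2) ^+ 2.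
  have p0 : 0 <= 1 + 8 * z + 28 * z ^+ 2 by nra.
  have := sqb p0 A8; nra.
have Ey : expR y = (((u ^+ 2) ^+ 2) ^+ 2) ^+ 2.
  rewrite -!exprM /u -expRM_natl; congr expR; rewrite /z; field => //.
have key : 1 <= (1 + x) * expR y.
  rewrite Ey.
  have hp : 0 <= 1 + x by lra.
  apply: le_trans (_ : 1 <= (1 + x) * (1 + 16 * z + 120 * z ^+ 2)) _; last first.
    exact: ler_wpM2l.
  set t := - x.
  have t0 : 0 <= t by rewrite /t; lra.
  have t1 : t <= 1/2 by rewrite /t; lra.
  have -> : (1 + x) * (1 + 16 * z + 120 * z ^+ 2) = 1 + t ^+ 2 *
     (15/32 * (t * (1/2 - t) * (3/2 + t)) + 15/32 * (1 - 2 * t) + 2 * (7/256) * t).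
    rewrite /z /y /t; field => //.
  rewrite lerDl; apply: mulr_ge0; first exact: exprn_ge0.
  have : 0 <= t * (1/2 - t) * (3/2 + t).
    apply: mulr_ge0; [apply: mulr_ge0|]; lra.
  lra.
have Ep := expR_gt0 y.
have -> : x - x ^+ 2 = - y by rewrite /y; ring.
rewrite expRN.
apply: (le_trans (_ : _ <= (expR y)^-1 * ((1 + x) * expR y))).
  by rewrite -{1}(mulr1 (expR y)^-1) ler_wpM2l // invr_ge0 ltW.
by rewrite mulrCA mulVf ?mulr1 // gt_eqF.
Qed.
Lemma Bmul_bound (R : realType) (V E : finType) (src dst : E -> V) (f : E -> R) v :
  simple_graph src dst -> (forall e, `|f e| <= 1) ->
  `|Bmul src dst f v| <= deg R src dst v.
Proof.
move=> [sg _] hf; rewrite /Bmul.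
apply: le_trans (ler_normB _ _) _.
apply: le_trans (lerD (ler_norm_sum _ _ _) (ler_norm_sum _ _ _)) _.
apply: le_trans (lerD (ler_sum _ (fun e _ => hf e)) (ler_sum _ (fun e _ => hf e))) _.
rewrite /deg -sum1_card natr_sum big_mkcond [\sum_(i | dst i == v) _]big_mkcond [\sum_(i in _) _]big_mkcond -big_split /=.
apply: ler_sum => e _; rewrite !inE.
have := sg e.
case: (src e == v) / eqP => [<-|_]; case: (dst e == src e) / eqP => //=.
- by move=> ->; rewrite eqxx.
- move=> *; lra.
- by rewrite add0r.
- by rewrite add0r.
Qed.
Lemma sumVK (R : realType) (V : finType) (k : nat) (c : R) :
  \sum_(v : V) \sum_(j < k) c = c * #|V|%:R * k%:R.
Proof.
under eq_bigr => v _ do rewrite sumr_const card_ord.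
have -> := sumr_const V (c *+ k).
by rewrite !mulr_natr -!mulrnA mulnC.
Qed.

Lemma sumT (R : realType) (T : nat) (c : R) : \sum_(m < T) c = c * T%:R.
Proof. by rewrite sumr_const card_ord mulr_natr. Qed.

Lemma ar_bound (R : realType) (a x : R) : 0 < a -> a <= 1/4 -> `|x| <= 2 ->
  -(1/2) <= a * x /\ a * x <= 1/2.
Proof. move=> h1 h2; rewrite ler_norml => /andP[h3 h4]; split.
- have : 0 <= a * (x + 2) by apply: mulr_ge0; lra. lra.
- have : 0 <= a * (2 - x) by apply: mulr_ge0; lra. lra.
Qed.

Lemma Bmul_fbar (R : realType) (V E : finType) (src dst : E -> V) (k : nat)
  (T : nat) (F : nat -> 'I_k -> E -> R) j v :
  Bmul src dst (fbar T F j) v = T%:R^-1 * \sum_(m < T) Bmul src dst (F m j) v.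
Proof.
rewrite /Bmul /fbar -!mulr_sumr -mulrBr sumrB; congr (_ * (_ - _)); exact: exchange_big.
Qed.

Theorem lemma2p12 (R : realType) (V E : finType) (src dst : E -> V) (k : nat)
  (b : V -> 'I_k -> R) (alpha : R) (T : nat) (F : nat -> 'I_k -> E -> R) :
  simple_graph src dst ->
  (3 <= #|V|)%N ->
  (forall v, 1 <= deg R src dst v) ->
  (1 <= k)%N ->
  (forall v j, `|b v j| <= deg R src dst v) ->
  0 < alpha -> alpha <= 1/4 ->
  (1 <= T)%N ->
  alpha ^+ 2 * T%:R >=
    ln (2 * (nR R V) * k%:R + 5 * T%:R * k%:R * (nR R V) ^+ 2) ->
  (* every round i < T was executed: valid step (3), no termination at (4) *)
  (forall i, (i < T)%N ->
     let phi := phi_of src dst (W src dst alpha b F i) in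
     valid_step3 src dst phi (F i) /\ no_terminate src dst b phi (F i)) ->
  forall v j,
    `|b v j - Bmul src dst (fbar T F j) v| <= 5 * alpha * deg R src dst v.
Proof.
move=> sg hV hdeg hk hb a0 a1 hT hln hrounds v0 j0.
have hdg0 : forall v, 0 < deg R src dst v.
  by move=> v; apply: lt_le_trans (hdeg v).
have hF : forall i, (i < T)%N -> forall j e, `|F i j e| <= 1.
  move=> i iT j e; case: (hrounds i iT) => hv _.
  have [js [_ [hjs hoth]]] := hv e.
  case: (eqVneq j js) => [->|ne]; last by rewrite hoth // normr0 ler01.
  rewrite hjs; case: ifP => _; first by rewrite normr1 lexx.
  by case: ifP => _; rewrite ?normrN ?normr1 ?normr0 ?ler01 ?lexx.
have hB : forall i, (i < T)%N -> forall j v,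
    `|Bmul src dst (F i j) v| <= deg R src dst v.
  by move=> i iT j v; apply: Bmul_bound => // e; exact: hF.
have hr : forall i, (i < T)%N -> forall v j, `|rvec src dst b (F i) v j| <= 2.
  move=> i iT v j; rewrite /rvec normrM normfV (gtr0_norm (hdg0 v)) ler_pdivrMr //.
  apply: le_trans (ler_normB _ _) _; have := hb v j; have := hB i iT j v; lra.
have har : forall i, (i < T)%N -> forall v j,
   -(1/2) <= alpha * rvec src dst b (F i) v j /\ alpha * rvec src dst b (F i) v j <= 1/2.
  by move=> i iT v j; apply: ar_bound => //; exact: hr.
have hpos : forall i, (i <= T)%N -> forall v j,
   0 < (W src dst alpha b F i v j).1 /\ 0 < (W src dst alpha b F i v j).2.
  elim=> [|i IH] hi v j /=; first by split; exact: ltr01.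
  have [p1 p2] := IH (ltnW hi) v j.
  have [q1 q2] := har i hi v j.
  split; apply: mulr_gt0 => //; lra.
pose Phi i := \sum_(v : V) \sum_(j < k)
  ((W src dst alpha b F i v j).1 + (W src dst alpha b F i v j).2).
have n0 : 0 <= nR R V by exact: ler0n.
have hstep : forall i, (i < T)%N ->
   Phi i.+1 <= Phi i + alpha * (2 * nR R V ^+ 2 * k%:R).
  move=> i iT.
  have -> : Phi i.+1 = Phi i + alpha * \sum_(v : V) \sum_(j < k)
      (((W src dst alpha b F i v j).1 - (W src dst alpha b F i v j).2)
        * rvec src dst b (F i) v j).
    rewrite /Phi mulr_sumr -big_split; apply: eq_bigr => v _.
    rewrite mulr_sumr -big_split; apply: eq_bigr => j _ /=; ring.
  rewrite lerD2l; apply: ler_wpM2l; first exact: ltW.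
  case: (hrounds i iT) => _ hnt.
  set w := W src dst alpha b F i.
  set phi := phi_of src dst w.
  have hd : forall v j,
      `|(w v j).1 - (w v j).2 - phi v j * deg R src dst v| <= nR R V.
    move=> v j; have [p1 p2] := hpos i (ltnW iT) v j.
    rewrite /phi /phi_of divfK ?gt_eqF // /wtil.
    rewrite ler_norml; apply/andP; split;
    case: (leP (nR R V) (w v j).1) => h1; case: (leP (nR R V) (w v j).2) => h2; lra.
  have -> : \sum_(v:V) \sum_(j<k) (((w v j).1 - (w v j).2) * rvec src dst b (F i) v j)
     = \sum_(v:V) \sum_(j<k) (phi v j * (b v j - Bmul src dst (F i j) v))
     + \sum_(v:V) \sum_(j<k) (((w v j).1 - (w v j).2 - phi v j * deg R src dst v)
          * rvec src dst b (F i) v j).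
    rewrite -big_split; apply: eq_bigr => v _; rewrite -big_split; apply: eq_bigr => j _ /=.
    have := hdg0 v; rewrite /rvec => dp; field; exact: (lt0r_neq0 dp).
  have h1 : \sum_(v:V) \sum_(j<k) (phi v j * (b v j - Bmul src dst (F i j) v)) <= 0.
    rewrite exchange_big /=.
    under eq_bigr => j _ do under eq_bigr => v _ do rewrite mulrBr.
    under eq_bigr => j _ do rewrite sumrB.
    rewrite sumrB subr_le0; exact: hnt.
  have h2 : \sum_(v:V) \sum_(j<k) (((w v j).1 - (w v j).2 - phi v j * deg R src dst v)
          * rvec src dst b (F i) v j) <= 2 * nR R V ^+ 2 * k%:R.
    apply: le_trans (_ : _ <= \sum_(v:V) \sum_(j<k) (nR R V * 2)) _.
      apply: ler_sum => v _; apply: ler_sum => j _.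
      apply: le_trans (ler_norm _) _; rewrite normrM.
      apply: ler_pM; [exact: normr_ge0 | exact: normr_ge0 | exact: hd | exact: hr].
    rewrite sumVK /nR; move: (#|V|%:R : R) => N.
    have -> : N * 2 * N * k%:R = 2 * N ^+ 2 * k%:R by ring.
    exact: lexx.
  lra.
have hPhi : forall i, (i <= T)%N ->
    Phi i <= 2 * nR R V * k%:R + i%:R * (alpha * (2 * nR R V ^+ 2 * k%:R)).
  elim=> [|i IH] hi.
    rewrite /Phi /= sumVK /nR mul0r addr0; move: (#|V|%:R : R) => N.
    have -> : (1 + 1) * N * k%:R = 2 * N * k%:R by ring.
    exact: lexx.
  apply: le_trans (hstep i hi) _; have := IH (ltnW hi).
  rewrite -addn1 natrD mulrDl mul1r; lra.
have hexp : forall i, (i <= T)%N -> forall v j,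
  expR (\sum_(m < i) (alpha * rvec src dst b (F m) v j
          - (alpha * rvec src dst b (F m) v j) ^+ 2))
    <= (W src dst alpha b F i v j).1 /\
  expR (\sum_(m < i) (- (alpha * rvec src dst b (F m) v j)
          - (- (alpha * rvec src dst b (F m) v j)) ^+ 2))
    <= (W src dst alpha b F i v j).2.
  elim=> [|i IH] hi v j.
    by rewrite !big_ord0 expR0 /=; split; exact: lexx.
  have [e1 e2] := IH (ltnW hi) v j.
  have [q1 q2] := har i hi v j.
  rewrite !big_ord_recr /= !expRD; split; apply: ler_pM;
    rewrite ?expR_ge0 //; rewrite -expRD; apply: L1; lra.
set Y := 2 * nR R V * k%:R + 5 * T%:R * k%:R * nR R V ^+ 2 in hln.
have npos : 0 < nR R V by rewrite /nR ltr0n; apply: leq_trans hV.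
have kpos : 0 < k%:R :> R by rewrite ltr0n.
have Tpos : 0 < T%:R :> R by rewrite ltr0n.
have Ypos : 0 < Y.
  have h1 := mulr_gt0 npos kpos.
  have h2 := mulr_gt0 (mulr_gt0 Tpos kpos) (mulr_gt0 npos npos).
  rewrite /Y expr2; nra.
have hPY : Phi T <= Y.
  apply: le_trans (hPhi T (leqnn T)) _; rewrite /Y lerD2l.
  have P0 : 0 <= T%:R * (nR R V ^+ 2 * k%:R).
    by apply: mulr_ge0; [exact: ltW | apply: mulr_ge0; [exact: exprn_ge0 | exact: ltW]].
  have := mulr_ge0 (ltW a0) P0; nra.
have hterm : (W src dst alpha b F T v0 j0).1 + (W src dst alpha b F T v0 j0).2 <= Phi T.
  rewrite /Phi (bigD1 v0) //= (bigD1 j0) //= -addrA lerDl.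
  apply: addr_ge0; apply: sumr_ge0 => x _; last apply: sumr_ge0 => y _.
    by have [p1 p2] := hpos T (leqnn T) v0 x; lra.
  by have [p1 p2] := hpos T (leqnn T) x y; lra.
have hYe : Y <= expR (alpha ^+ 2 * T%:R).
  rewrite -[X in X <= _](lnK (_ : Y \in Num.pos)) ?posrE // ler_expR //.
have [e1 e2] := hexp T (leqnn T) v0 j0.
have [p1 p2] := hpos T (leqnn T) v0 j0.
pose Sr := \sum_(m < T) rvec src dst b (F m) v0 j0.
have hsq : forall m : 'I_T, (alpha * rvec src dst b (F m) v0 j0) ^+ 2 <= 4 * alpha ^+ 2.
  move=> m; have := hr m (ltn_ord m) v0 j0; rewrite ler_norml => /andP[u1 u2].
  rewrite exprMn; have : (rvec src dst b (F m) v0 j0) ^+ 2 <= 4 by nra.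
  move=> h; have a2 : 0 <= alpha ^+ 2 by exact: sqr_ge0.
  have := ler_wpM2l a2 h; lra.
have hS1 : alpha * Sr - 4 * alpha ^+ 2 * T%:R <= alpha ^+ 2 * T%:R.
  rewrite -ler_expR; apply: le_trans _ hYe; apply: le_trans _ hPY; apply: le_trans _ hterm.
  apply: le_trans (_ : _ <= (W src dst alpha b F T v0 j0).1) _; last lra.
  apply: le_trans _ e1; rewrite ler_expR /Sr mulr_sumr -sumT -sumrB.
  by apply: ler_sum => m _; have := hsq m; lra.
have hS2 : - (alpha * Sr) - 4 * alpha ^+ 2 * T%:R <= alpha ^+ 2 * T%:R.
  rewrite -ler_expR; apply: le_trans _ hYe; apply: le_trans _ hPY; apply: le_trans _ hterm.
  apply: le_trans (_ : _ <= (W src dst alpha b F T v0 j0).2) _; last lra.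
  apply: le_trans _ e2; rewrite ler_expR /Sr mulr_sumr -sumT -sumrN -sumrB.
  by apply: ler_sum => m _; have := hsq m; rewrite sqrrN; lra.
have hSr : `|Sr| <= 5 * alpha * T%:R.
  rewrite ler_norml; apply/andP; split; nra.
have dpos := hdg0 v0.
have hSd : Sr * deg R src dst v0 = b v0 j0 * T%:R - \sum_(m < T) Bmul src dst (F m j0) v0.
  by rewrite /Sr /rvec -mulr_suml divfK ?gt_eqF // sumrB sumT.
rewrite Bmul_fbar.
have -> : b v0 j0 - T%:R^-1 * \sum_(m < T) Bmul src dst (F m j0) v0
        = Sr * deg R src dst v0 / T%:R.
  rewrite hSd; field; exact: lt0r_neq0.
rewrite normrM normfV normrM (gtr0_norm dpos) (gtr0_norm Tpos) ler_pdivrMr //.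
have := ler_wpM2r (ltW dpos) hSr; nra.
Qed.
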